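(* Let $\mathcal{X}$ be a class of abelian groups with $\mathcal{B}\subseteq\mathcal{X}\subseteq\mathcal{H}$. Then $\mathcal{X}^s=\mathcal{B}^s$, i.e., a group $G$ is in $\mathcal{X}^s$ if and only if $G$ is super Bassian. In particular, a group is super Hopfian if and only if it is super Bassian.
   Context: All groups are abelian; a class is closed under isomorphism. $\mathcal{B}$: Bassian groups ($G$ Bassian iff there is no nonzero $H\le G$ with an injective homomorphism $G\to G/H$). $\mathcal{H}$: Hopfian groups ($G\not\cong G/H$ for every nonzero subgroup $H$). For a class $\mathcal{X}$, $\mathcal{X}^s=\{G\in\mathcal{X}:\text{every epimorphic image of }G\text{ is in }\mathcal{X}\}$; super Bassian means in $\mathcal{B}^s$, super Hopfian means in $\mathcal{H}^s$. *)

(* Defs.v *)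
From HB Require Import structures.
From mathcomp Require Import all_boot all_algebra.
Set Implicit Arguments. Unset Strict Implicit. Unset Printing Implicit Defensive.
Import GRing.Theory.
Local Open Scope ring_scope.

Definition surj (A B : Type) (f : A -> B) : Prop := forall y, exists x, f x = y.

Definition iso_grp (G H : zmodType) : Prop :=
  exists f : {additive G -> H}, bijective f.

Definition iso_closed (X : zmodType -> Prop) : Prop :=
  forall G H : zmodType, iso_grp G H -> X G -> X H.

Definition epi_image (G Q : zmodType) : Prop :=
  exists p : {additive G -> Q}, surj p.

(* A quotient G/H with H a nonzero subgroup is represented (up to isomorphism)
   by a surjective homomorphism p : G -> Q with nonzero kernel, i.e. p not
   injective (Q ~ G / ker p). *)

Definition Bassian (G : zmodType) : Prop :=
  forall (Q : zmodType) (p : {additive G -> Q}), surj p -> ~ injective p ->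
    ~ exists f : {additive G -> Q}, injective f.

Definition Hopfian (G : zmodType) : Prop :=
  forall (Q : zmodType) (p : {additive G -> Q}), surj p -> ~ injective p ->
    ~ iso_grp G Q.

Definition super (X : zmodType -> Prop) (G : zmodType) : Prop :=
  X G /\ forall Q : zmodType, epi_image G Q -> X Q.

(* Main.v *)
Require Import Defs.
From HB Require Import structures.
From mathcomp Require Import all_boot all_algebra.
From mathcomp Require Import generic_quotient ring_quotient.
From mathcomp Require Import boolp classical_sets.
From mathcomp Require Import zify.
Set Implicit Arguments. Unset Strict Implicit. Unset Printing Implicit Defensive.
Import GRing.Theory Num.Theory.
Local Open Scope quotient_scope.
Local Open Scope ring_scope.


Definition subgrp (G : zmodType) (S : G -> Prop) :=
  S 0 /\ forall x y, S x -> S y -> S (x - y).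

Section QuotEx.
Variables (G : zmodType) (S : G -> Prop) (HS : subgrp S).
Definition SP : {pred G} := fun x => `[< S x >].
Lemma SP_closed : zmod_closed SP.
Proof.
case: HS => S0 SB; split; first by apply/asboolP.
by move=> x y /asboolP Sx /asboolP Sy; apply/asboolP; apply: SB.
Qed.
HB.instance Definition _ := GRing.isZmodClosed.Build G SP SP_closed.

Lemma quot_exists : exists (Q : zmodType) (pi : {additive G -> Q}),
  surj pi /\ forall x, pi x = 0 <-> S x.
Proof.
exists (Quotient.quot SP).
exists (\pi_(Quotient.quot SP) : {additive _ -> _}).
split.
  by move=> y; exists (repr y); exact: reprK.
have E x : (x \in SP) = (\pi_(Quotient.quot SP) x == 0).
  by rewrite -[x]subr0 Quotient.idealrBE subr0 (raddf0 (\pi_(Quotient.quot SP) : {additive _ -> _})).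
move=> x; split.
  move=> h; have : x \in SP by rewrite E h.
  by rewrite unfold_in => /asboolP.
move=> Sx; have : x \in SP by rewrite unfold_in; apply/asboolP.
by rewrite E => /eqP.
Qed.
End QuotEx.
Lemma subgrpN (G : zmodType) (S : G -> Prop) : subgrp S -> forall x, S x -> S (- x).
Proof. by case=> S0 SB x Sx; rewrite -sub0r; apply: SB. Qed.
Lemma subgrpD (G : zmodType) (S : G -> Prop) : subgrp S -> forall x y, S x -> S y -> S (x + y).
Proof. by move=> HS x y Sx Sy; rewrite -[y]opprK; apply: HS.2 => //; apply: subgrpN. Qed.
Lemma subgrpMn (G : zmodType) (S : G -> Prop) : subgrp S -> forall x n, S x -> S (x *+ n).
Proof.
move=> HS x n Sx; elim: n => [|n IH]; first by rewrite mulr0n; case: HS.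
by rewrite mulrS; apply: subgrpD.
Qed.
Lemma subgrpMz (G : zmodType) (S : G -> Prop) : subgrp S -> forall x k, S x -> S (x *~ k).
Proof.
move=> HS x [n|n] Sx; first by rewrite -pmulrn; apply: subgrpMn.
by rewrite NegzE mulrNz -pmulrn; apply: subgrpN => //; apply: subgrpMn.
Qed.

Section ZornS.
Local Open Scope classical_set_scope.
Lemma zorn_sub (G : zmodType) (B W : G -> Prop) : subgrp B ->
  exists M : G -> Prop, [/\ subgrp M, (forall x, B x -> M x),
    (forall x, M x -> W x -> B x) &
    forall x, ~ M x -> exists a k, [/\ M a, W (a + x *~ k) & ~ B (a + x *~ k)]].
Proof.
move=> HB.
pose P := fun A : set G => A = set0 \/ [/\ subgrp A, B `<=` A & forall x, A x -> W x -> B x].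
have [A [PA maxA]] : exists A, P A /\ forall C, A `<` C -> ~ P C.
  apply: Zorn_bigcup => F FP Ftot.
  have [allE|] := pselect (forall X, F X -> X = set0).
    left; apply/seteqP; split => // x [X FX Xx]; by rewrite (allE X FX) in Xx.
  move=> /existsNP [X0 /not_implyP [FX0 X0n]].
  have goodX X : F X -> X <> set0 -> [/\ subgrp X, B `<=` X & forall x, X x -> W x -> B x].
    by move=> FX Xn; case: (FP X FX).
  have [HX0 BX0 _] := goodX _ FX0 X0n.
  right; split.
  - split; first by exists X0 => //; case: HX0.
    move=> x y [X FX Xx] [Y FY Yy].
    have XnE : X <> set0 by move=> E; rewrite E in Xx.
    have YnE : Y <> set0 by move=> E; rewrite E in Yy.
    case: (Ftot X Y FX FY) => [XY|YX].
      exists Y => //; have [HY _ _] := goodX _ FY YnE; apply: HY.2 => //; exact: XY.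
    exists X => //; have [HX _ _] := goodX _ FX XnE; apply: HX.2 => //; exact: YX.
  - by move=> x Bx; exists X0 => //; apply: BX0.
  - move=> x [X FX Xx] Wx.
    have XnE : X <> set0 by move=> E; rewrite E in Xx.
    by have [_ _ ] := goodX _ FX XnE; apply.
have PB : P B by right; split.
have Agood : [/\ subgrp A, B `<=` A & forall x, A x -> W x -> B x].
  case: PA => // A0; exfalso; apply: (maxA B) => //; rewrite A0; split => // /(_ 0).
  by case: HB => B0 _ /(_ B0).
case: Agood => HA BA AWB.
exists A; split => // x Ax.
pose C := fun y => exists a k, A a /\ y = a + x *~ k.
apply: contrapT => hn.
apply: (maxA C).
  split.
    by move=> a Aa; exists a, 0; rewrite mulr0z addr0.
  move=> /(_ x) h; apply: Ax; apply: h; exists 0, 1; rewrite add0r mulr1z; split => //; exact: HA.1.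
rewrite /P; right; split.
- split; first by exists 0, 0; rewrite mulr0z addr0; split => //; exact: HA.1.
  move=> _ _ [a [k [Aa ->]]] [b [l [Ab ->]]].
  exists (a - b), (k - l); split; first by apply: HA.2.
  by rewrite mulrzBr opprD addrACA.
- by move=> y By; exists y, 0; rewrite mulr0z addr0; split => //; apply: BA.
- move=> _ [a [k [Aa ->]]] Wy; apply: contrapT => nB; apply: hn.
  by exists a, k.
Qed.
End ZornS.
Lemma subgrp_sub (G : zmodType) (S : G -> Prop) : subgrp S -> forall x y, S x -> S y -> S (x - y).
Proof. by case. Qed.


Definition mulby (R : zmodType) (n : nat) (x : R) := x *+ n.
Lemma mulby_is_zmod_morphism (R : zmodType) n : zmod_morphism (@mulby R n).
Proof. by move=> x y; rewrite /mulby mulrnBl. Qed.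
HB.instance Definition _ (R : zmodType) n :=
  GRing.isZmodMorphism.Build R R (@mulby R n) (@mulby_is_zmod_morphism R n).

Lemma nonHop_endo (R : zmodType) (e : {additive R -> R}) :
  surj e -> ~ injective e -> ~ Hopfian R.
Proof.
move=> se ie hR; apply: (hR R e se ie).
by exists (idfun : {additive R -> R}); exists idfun.
Qed.

Lemma epi_trans (A B C : zmodType) : epi_image A B -> epi_image B C -> epi_image A C.
Proof.
move=> [f sf] [g sg]; exists (g \o f : {additive A -> C}) => z.
have [y <-] := sg z; have [x <-] := sf y; by exists x.
Qed.

Lemma min_order (R : zmodType) (q e : nat) (z : R) : z != 0 -> z *+ q ^ e = 0 ->
  exists w : R, w != 0 /\ w *+ q = 0.
Proof.
elim: e z => [|e IH] z z0; first by rewrite expn0 mulr1n => h; rewrite h eqxx in z0.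
rewrite expnS mulrnA => h.
have [zq|zq] := eqVneq (z *+ q) 0; first by exists z.
exact: IH zq h.
Qed.

Lemma bezout_prime (q : nat) (d : int) : prime q -> ~~ (q%:Z %| d)%Z ->
  exists u v : int, u * d + v * q%:Z = 1.
Proof.
move=> pq nd; have [u [v E]] := Bezoutz d q%:Z.
exists u, v; rewrite E; apply/eqP.
have : coprimez d q%:Z by rewrite coprimezE coprime_sym prime_coprime // -dvdzE.
done.
Qed.

Definition lc (Q : zmodType) (w : nat -> Q) (k : nat) (d : nat -> int) :=
  \sum_(i < k) w i *~ d i.

Lemma lcB (Q : zmodType) (w : nat -> Q) k d d' :
  lc w k (fun i => d i - d' i) = lc w k d - lc w k d'.
Proof. by rewrite /lc -sumrB; apply: eq_bigr => i _; rewrite mulrzBr. Qed.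

Lemma lc0 (Q : zmodType) (w : nat -> Q) k : lc w k (fun _ => 0) = 0.
Proof. by rewrite /lc big1 // => i _; rewrite mulr0z. Qed.


Lemma mulrn_exp0 (Q : zmodType) (x : Q) q a b : x *+ q ^ a = 0 -> x *+ q ^ (a + b) = 0.
Proof. by move=> h; rewrite expnD mulrnA h mul0rn. Qed.

Lemma common_exp (Q : zmodType) (q : nat) (s : seq Q) :
  (forall x : Q, exists e, x *+ q ^ e = 0) ->
  exists E, forall i, (i < size s)%N -> s`_i *+ q ^ E = 0.
Proof.
move=> tor; elim: s => [|a s [E IH]]; first by exists 0%N.
have [e he] := tor a; exists (e + E)%N => [[|i]] /=.
  by move=> _; apply: mulrn_exp0.
by rewrite ltnS addnC => /IH h; apply: mulrn_exp0.
Qed.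

Lemma mulrz_mod (Q : zmodType) (x : Q) (N : nat) (d : int) : (0 < N)%N -> x *+ N = 0 ->
  x *~ d = x *+ `|(d %% N%:Z)%Z|%N.
Proof.
move=> N0 xN; rewrite {1}(divz_eq d N%:Z) mulrzDr [(_ %/ _)%Z * _]mulrC mulrzA.
have -> : x *~ N%:Z = 0 by rewrite -pmulrn.
rewrite mul0rz add0r pmulrn gez0_abs //; apply: modz_ge0.
by rewrite eqz_nat -lt0n.
Qed.

Lemma alpha_case (Q : zmodType) (q : nat) (s : seq Q) (c : nat -> Q) : prime q ->
  (forall x : Q, exists e, x *+ q ^ e = 0) -> injective c ->
  (forall x, exists d y, x = lc (nth 0 s) (size s) d + y *+ q) ->
  exists R, epi_image Q R /\ ~ Hopfian R.
Proof.
move=> pq tor injc gen.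
pose T x := exists d, x = lc (nth 0 s) (size s) d.
have HT : subgrp T.
  split; first by exists (fun _ => 0); rewrite lc0.
  by move=> _ _ [d ->] [d' ->]; exists (fun i => d i - d' i); rewrite lcB.
have [E hE] := common_exp s tor.
pose N := (q ^ E)%N.
have N0 : (0 < N)%N by rewrite expn_gt0 prime_gt0.
pose L := map (fun g : {ffun 'I_(size s) -> 'I_N} => \sum_(i < size s) s`_i *+ g i)
  (enum {ffun 'I_(size s) -> 'I_N}).
have TL x : T x -> x \in L.
  move=> [d ->].
  have H (i : 'I_(size s)) : (`|(d i %% N%:Z)%Z|%N < N)%N.
    rewrite -ltz_nat gez0_abs; first by apply: ltz_pmod; rewrite ltz_nat.
    by apply: modz_ge0; rewrite eqz_nat -lt0n.
  apply/mapP; exists [ffun i => Ordinal (H i)]; first by rewrite mem_enum.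
  rewrite /lc; apply: eq_bigr => i _; rewrite ffunE /=.
  by apply: mulrz_mod => //; apply: hE.
have [k nTk] : exists k, ~ T (c k).
  apply: contrapT => hn.
  have allT k : T (c k) by apply: contrapT => nT; apply: hn; exists k.
  have : (size (map c (iota 0 (size L).+1)) <= size L)%N.
    apply: uniq_leq_size; first by rewrite map_inj_uniq ?iota_uniq.
    by move=> x /mapP [j _ ->]; apply: TL.
  by rewrite size_map size_iota ltnn.
have [Q2 [pi [spi kpi]]] := quot_exists HT.
exists Q2; split; first by exists pi.
apply: (@nonHop_endo _ (@mulby Q2 q : {additive Q2 -> Q2})).
  move=> z; have [x <-] := spi z; have [d [y ->]] := gen x.
  exists (pi y); rewrite raddfD raddfMn /=.
  have -> : pi (lc (nth 0 s) (size s) d) = 0 by apply/kpi; exists d.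
  by rewrite add0r.
move=> inj.
have nz : pi (c k) != 0 by apply/eqP => /kpi.
have [e he] := tor (c k).
have [w [w0 wq]] : exists w : Q2, w != 0 /\ w *+ q = 0.
  by apply: (@min_order _ q e (pi (c k))) => //; rewrite -raddfMn he raddf0.
have : @mulby Q2 q w = @mulby Q2 q 0 by rewrite /mulby wq mul0rn.
by move/inj => h; rewrite h eqxx in w0.
Qed.


Definition cf (k : nat) (d : nat -> int) i := if (i < k)%N then d i else 0.

Lemma lc_pad (Q : zmodType) (w : nat -> Q) k K d : (k <= K)%N -> lc w k d = lc w K (cf k d).
Proof.
move=> kK; rewrite /lc (big_ord_widen _ (fun i => w i *~ d i) kK) big_mkcond /=.
by apply: eq_bigr => i _; rewrite /cf; case: ifP => _; rewrite ?mulr0z.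
Qed.

Lemma lcZ (Q : zmodType) (w : nat -> Q) k d u : lc w k d *~ u = lc w k (fun i => d i * u).
Proof. by rewrite /lc mulrz_suml; apply: eq_bigr => i _; rewrite mulrzA. Qed.

Lemma lcN (Q : zmodType) (w : nat -> Q) k d : - lc w k d = lc w k (fun i => - d i).
Proof. by rewrite /lc -sumrN; apply: eq_bigr => i _; rewrite mulrNz. Qed.

Lemma lcS (Q : zmodType) (w : nat -> Q) k d : lc w k.+1 d = lc w k d + w k *~ d k.
Proof. by rewrite /lc big_ord_recr. Qed.

Lemma castF (q : nat) (a b : int) : prime q -> (q%:Z %| a - b)%Z -> (a%:~R : 'F_q) = b%:~R.
Proof.
move=> pq /dvdzP [t E]; have -> : a = b + t * q%:Z by rewrite -E addrC subrK.
have h : ((q%:Z)%:~R : 'F_q) = 0 := pchar_Fp_0 pq.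
by rewrite intrD intrM h mulr0 addr0.
Qed.

Definition Bq (Q : zmodType) (q : nat) (x : Q) := exists y, x = y *+ q.
Definition W0 (Q : zmodType) (q : nat) (w : nat -> Q) (x : Q) :=
  exists k d y, x = lc w k d + y *+ q.

Lemma subBB (G : zmodType) (a b c d : G) : (a - b) - (c - d) = (a - c) - (b - d).
Proof. by rewrite !opprB addrACA [- b + _]addrC -addrACA. Qed.

Lemma cfE (F : pzRingType) k d j : (if (j < k)%N then (d j)%:~R else 0) = (cf k d j)%:~R :> F.
Proof. by rewrite /cf; case: ifP. Qed.

Section Beta.
Variables (Q : zmodType) (q : nat) (pq : prime q) (w : nat -> Q).
Hypothesis wP : forall k, ~ exists d y, w k = lc w k d + y *+ q.

Lemma indep k d y : lc w k d = y *+ q -> forall i, (i < k)%N -> (q%:Z %| d i)%Z.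
Proof.
elim: k d y => [//|k IH] d y; rewrite lcS => E i.
have [dk|ndk] := boolP (q%:Z %| d k)%Z.
  have /dvdzP [t dt] := dk.
  have E' : lc w k d = (y - w k *~ t) *+ q.
    by rewrite mulrnBl -E dt mulrzA -pmulrn addrK.
  rewrite ltnS leq_eqVlt => /orP [/eqP -> //|]; exact: IH E' i.
exfalso; have [u [v uv]] := bezout_prime pq ndk.
apply: (@wP k); exists (fun i => - (d i * u)), (y *~ u + w k *~ v).
rewrite (_ : lc w k (fun i => - (d i * u)) = - (lc w k d *~ u)); last by rewrite lcZ lcN.
have -> : lc w k d = y *+ q - w k *~ d k by rewrite -E addrK.
rewrite !pmulrn mulrzBl opprB mulrzDl -!mulrzA.
rewrite [u * q%:Z]mulrC addrA subrK -mulrzDr [d k * u]mulrC uv.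
by rewrite mulr1z.
Qed.

Variables (M : Q -> Prop) (HM : subgrp M).
Hypotheses (BM : forall x, Bq q x -> M x) (MWB : forall x, M x -> W0 q w x -> Bq q x)
  (maxM : forall x, ~ M x -> exists a k, [/\ M a, W0 q w (a + x *~ k) & ~ Bq q (a + x *~ k)]).

Lemma decomp x : exists kd : nat * (nat -> int), M (x - lc w kd.1 kd.2).
Proof.
have [Mx|nMx] := pselect (M x).
  by exists (0%N, fun _ => 0); rewrite /lc big_ord0 subr0.
have [a [k [Ma [K [D [y E]]] nB]]] := maxM nMx.
have [dk|ndk] := boolP (q%:Z %| k)%Z.
  exfalso; apply: nB; apply: MWB; last by exists K, D, y.
  apply: subgrpD => //; apply: BM; have /dvdzP [t ->] := dk.
  by exists (x *~ t); rewrite mulrzA -pmulrn.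
have [u [v uv]] := bezout_prime pq ndk.
exists (K, fun i => D i * u) => /=.
have -> : x - lc w K (fun i => D i * u) = (x *~ v + y *~ u) *+ q - a *~ u.
  rewrite -lcZ (_ : lc w K D = a + x *~ k - y *+ q); last by rewrite E addrK.
  rewrite !pmulrn !mulrzBl !mulrzDl -!mulrzA [q%:Z * u]mulrC.
  rewrite {1}(_ : x = x *~ (k * u) + x *~ (v * q%:Z)); last by rewrite -mulrzDr [k * u]mulrC uv mulr1z.
  rewrite [a *~ u + _]addrC opprB opprD addrA [_ + (- _ - _)]addrC addrA.
  set X := x *~ (k * u); set A := a *~ u; set V := x *~ _; set Y := y *~ _.
  by rewrite (addrC (- X) (- A)) -(addrA (- A)) addKr [- A + V]addrC addrAC.
apply: (subgrp_sub HM); first by apply: BM; eexists.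
exact: subgrpMz.
Qed.

Definition rep x : nat * (nat -> int) := proj1_sig (cid (decomp x)).
Lemma repP x : M (x - lc w (rep x).1 (rep x).2).
Proof. exact: (proj2_sig (cid (decomp x))). Qed.
Definition phi x : {poly 'F_q} := \poly_(i < (rep x).1) ((rep x).2 i)%:~R.

Lemma wd x k d k' d' : M (x - lc w k d) -> M (x - lc w k' d') ->
  forall i, (q%:Z %| cf k d i - cf k' d' i)%Z.
Proof.
set K := maxn k k'.
rewrite (lc_pad w d (leq_maxl k k')) (lc_pad w d' (leq_maxr k k')) -/K => Hx Hy i.
have MD : M (lc w K (fun i => cf k d i - cf k' d' i)).
  rewrite lcB (_ : _ - _ = (x - lc w K (cf k' d')) - (x - lc w K (cf k d))).
    exact: subgrp_sub.
  by rewrite subBB subrr sub0r opprB.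
have [y Ey] : Bq q (lc w K (fun i => cf k d i - cf k' d' i)).
  by apply: MWB => //; exists K, (fun i => cf k d i - cf k' d' i), 0; rewrite mul0rn addr0.
have [iK|Ki] := ltnP i K; first by have := indep Ey iK.
rewrite /cf !ifF ?subrr ?dvdz0 //; apply/negbTE; rewrite -leqNgt.
  exact: leq_trans (leq_maxr k k') Ki.
exact: leq_trans (leq_maxl k k') Ki.
Qed.

Lemma phiE x k d : M (x - lc w k d) -> phi x = \poly_(i < k) (d i)%:~R.
Proof.
move=> H; apply/polyP => j; rewrite !coef_poly !cfE; apply: castF => //.
exact: wd (repP x) H j.
Qed.

Lemma phiB : zmod_morphism phi.
Proof.
move=> x y; set k := (rep x).1; set d := (rep x).2; set k' := (rep y).1; set d' := (rep y).2.
set K := maxn k k'.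
have Hx : M (x - lc w K (cf k d)) by rewrite -lc_pad ?leq_maxl //; exact: repP.
have Hy : M (y - lc w K (cf k' d')) by rewrite -lc_pad ?leq_maxr //; exact: repP.
have H : M ((x - y) - lc w K (fun i => cf k d i - cf k' d' i)).
  by rewrite lcB subBB; exact: subgrp_sub.
rewrite (phiE H) (phiE Hx) (phiE Hy); apply/polyP => j.
by rewrite coefB !coef_poly; case: ifP => _; rewrite ?intrB ?subr0.
Qed.

HB.instance Definition _ := GRing.isZmodMorphism.Build Q {poly 'F_q} phi phiB.

Lemma phi_surj : surj phi.
Proof.
move=> P; pose D := fun i : nat => Posz (nat_of_ord (P`_i : 'F_q)).
exists (lc w (size P) D).
rewrite (@phiE (lc w (size P) D) (size P) D); last by rewrite subrr; case: HM.
rewrite -[RHS]coefK; apply/polyP => j; rewrite !coef_poly; case: ifP => // _.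
exact: natr_Zp.
Qed.

Lemma beta_final : exists R, epi_image Q R /\ ~ Hopfian R.
Proof.
exists {poly 'F_q}; split; first by exists (phi : {additive Q -> {poly 'F_q}}); exact: phi_surj.
apply: (@nonHop_endo _ (drop_poly 1 : {additive {poly 'F_q} -> {poly 'F_q}})).
  by move=> P; exists (P * 'X^1); rewrite /= drop_polyMXn_id.
move=> inj; have : drop_poly 1 (1 : {poly 'F_q}) = drop_poly 1 0.
  by rewrite drop_poly0r drop_poly_eq0 // size_poly1.
by move/inj/eqP; rewrite oner_eq0.
Qed.
End Beta.

Lemma subgrp_Bq (Q : zmodType) (q : nat) : subgrp (@Bq Q q).
Proof.
split; first by exists 0; rewrite mul0rn.
by move=> _ _ [y ->] [z ->]; exists (y - z); rewrite mulrnBl.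
Qed.

Lemma beta_case (Q : zmodType) (q : nat) : prime q ->
  (forall s : seq Q, exists x, ~ exists d y, x = lc (nth 0 s) (size s) d + y *+ q) ->
  exists R, epi_image Q R /\ ~ Hopfian R.
Proof.
move=> pq hb.
pose nf s := proj1_sig (cid (hb s)).
have nfP s : ~ exists d y, nf s = lc (nth 0 s) (size s) d + y *+ q := proj2_sig (cid (hb s)).
pose Ls := fix Ls k := if k is k'.+1 then rcons (Ls k') (nf (Ls k')) else [::].
pose w k := nf (Ls k).
have LsE k : size (Ls k) = k /\ forall i, (i < k)%N -> nth 0 (Ls k) i = w i.
  elim: k => [|k [sz IH]]; first by [].
  split; first by rewrite /= size_rcons sz.
  move=> i; rewrite ltnS leq_eqVlt => /orP [/eqP ->|ik] /=; rewrite nth_rcons sz.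
    by rewrite ltnn eqxx.
  by rewrite ik IH.
have wP k : ~ exists d y, w k = lc w k d + y *+ q.
  move=> [d [y E]]; apply: (nfP (Ls k)); exists d, y.
  rewrite /w in E; rewrite E (LsE k).1 /lc; congr (_ + _); apply: eq_bigr => i _.
  by rewrite (LsE k).2.
have [M [HM BM MWB maxM]] := zorn_sub (W0 q w) (subgrp_Bq Q q).
exact: (@beta_final Q q pq w wP M HM BM MWB maxM).
Qed.


Lemma pgroup_case (Q : zmodType) (q : nat) (c : nat -> Q) : prime q ->
  (forall x : Q, exists e, x *+ q ^ e = 0) -> injective c ->
  exists R, epi_image Q R /\ ~ Hopfian R.
Proof.
move=> pq tor injc.
have [[s hs]|ns] := pselect (exists s : seq Q, forall x, exists d y, x = lc (nth 0 s) (size s) d + y *+ q).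
  exact: alpha_case pq tor injc hs.
apply: beta_case pq _ => s; apply/existsNP => h; apply: ns; exists s => x.
exact: contrapT (h x).
Qed.

Lemma mulrz_abs0 (G : zmodType) (x : G) m : x *~ m = 0 -> x *+ `|m|%N = 0.
Proof.
case: m => n; first by rewrite -pmulrn.
by rewrite NegzE mulrNz -pmulrn => /eqP; rewrite oppr_eq0 => /eqP.
Qed.

Lemma coprime_kill (G : zmodType) (q m : nat) (s : G) : prime q -> coprime q m ->
  s *+ q = 0 -> s *+ m = 0 -> s = 0.
Proof.
move=> pq cqm sq sm.
have nd : ~~ (q%:Z %| m%:Z)%Z by rewrite dvdzE /= -prime_coprime.
have [u [v uv]] := bezout_prime pq nd.
rewrite -[s]mulr1z -uv mulrzDr [u * _]mulrC [v * _]mulrC !mulrzA -!pmulrn sm sq.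
by rewrite !mul0rz addr0.
Qed.

Lemma mulrzn_comm (G : zmodType) (x : G) (k : int) (m : nat) : x *~ k *+ m = x *+ m *~ k.
Proof. by rewrite !pmulrn -!mulrzA mulrC. Qed.

Lemma qseq_case (G1 : zmodType) (q : nat) (b : nat -> G1) : prime q ->
  (forall j k, (j < k)%N -> exists n, (b k - b j) *+ n != 0 /\ (b k - b j) *+ (n * q) = 0) ->
  exists R, epi_image G1 R /\ ~ Hopfian R.
Proof.
move=> pq hb.
pose S (x : G1) := x *+ q = 0.
have HB0 : subgrp (fun x : G1 => x = 0) by split => // x y -> ->; rewrite subr0.
have [M [HM BM MS maxM]] := zorn_sub S HB0.
have [Q2 [pi [spi kpi]]] := quot_exists HM.
have step x : ~ M x -> exists k : int, [/\ k != 0, pi x *~ (k * q%:Z) = 0 &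
    exists s, [/\ s *+ q = 0, s != 0 & pi s = pi x *~ k]].
  move=> nMx; have [a [k [Ma Sak nak]]] := maxM x nMx.
  have pis : pi (a + x *~ k) = pi x *~ k.
    by rewrite raddfD raddfMz (proj2 (kpi a) Ma) add0r.
  exists k; split.
  - apply/eqP => k0; apply: nak; rewrite k0 mulr0z addr0 in Sak *.
    by apply: MS.
  - by rewrite mulrzA -pis -pmulrn -raddfMn Sak raddf0.
  - exists (a + x *~ k); split => //; exact/eqP.
have tor : forall y : Q2, exists e, y *+ q ^ e = 0.
  move=> y; have [x <-] := spi y.
  have [Mx|nMx] := pselect (M x).
    by exists 0%N; rewrite expn0 mulr1n; apply/kpi.
  have [k [k0 hk _]] := step x nMx.
  have n0 : (0 < (absz (k * q%:Z)%R))%N.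
    by rewrite absz_gt0 mulf_neq0 // eqz_nat -lt0n prime_gt0.
  have [m cm nE] := pfactor_coprime pq n0.
  have xn := mulrz_abs0 hk; rewrite nE mulnC mulrnA in xn.
  exists (logn q (absz (k * q%:Z)%R)).
  set t := pi x *+ _ in xn *; apply: contrapT => /eqP tn0.
  have nMx' : ~ M (x *+ q ^ logn q (absz (k * q%:Z)%R)).
    by move=> /kpi; rewrite raddfMn => /eqP; rewrite (negbTE tn0).
  have [k' [_ _ [s [sq sn0 pis]]]] := step _ nMx'.
  have : s *+ m = 0.
    apply: MS; last by rewrite /S -mulrnA mulnC mulrnA sq mul0rn.
    by apply/kpi; rewrite raddfMn pis raddfMn -/t mulrzn_comm xn mul0rz.
  by move/(coprime_kill pq cm sq)/eqP; rewrite (negbTE sn0).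
have injc : injective (fun k => pi (b k)).
  have L j k : (j < k)%N -> pi (b k) <> pi (b j).
    move=> jk E; have [n [nz nq]] := hb j k jk.
    have : M (b k - b j) by apply/kpi; rewrite raddfB E subrr.
    move=> /(subgrpMn HM n) /MS; rewrite /S -mulrnA nq => /(_ erefl) h.
    by rewrite h eqxx in nz.
  move=> j k /= E; case: (ltngtP j k) => // [jk|kj].
    by exfalso; apply: (L j k jk); rewrite E.
  by exfalso; apply: (L k j kj); rewrite E.
have [R [eR nR]] := pgroup_case pq tor injc.
by exists R; split => //; apply: epi_trans eR; exists pi.
Qed.


Lemma min_order2 (R : zmodType) (q e : nat) (z : R) : z != 0 -> z *+ q ^ e = 0 ->
  exists i, z *+ q ^ i != 0 /\ z *+ (q ^ i * q) = 0.
Proof.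
move=> z0; elim: e => [|e IH]; first by rewrite expn0 mulr1n => h; rewrite h eqxx in z0.
have [h|h] := eqVneq (z *+ q ^ e) 0; first by move=> _; exact: IH.
by move=> he; exists e; split => //; rewrite -expnSr.
Qed.

Lemma lc_ext (Q : zmodType) (w : nat -> Q) k d d' : (forall i, d i = d' i) -> lc w k d = lc w k d'.
Proof. by move=> h; rewrite /lc; apply: eq_bigr => i _; rewrite h. Qed.

Lemma lc_single (Q : zmodType) (w : nat -> Q) N k : (k < N)%N ->
  lc w N (fun i => (i == k)%:Z) = w k.
Proof.
move=> kN; rewrite /lc (bigD1 (Ordinal kN)) //= eqxx mulr1z big1 ?addr0 //.
move=> i /eqP ik; case: eqP => [ik'|]; last by rewrite mulr0z.
by exfalso; apply: ik; apply: val_inj.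
Qed.

Lemma two_odd (x : int) : x * 2 != 1.
Proof. apply/eqP; lia. Qed.

Section Seq.
Variables (G Q0 : zmodType) (p f : {additive G -> Q0}).
Hypotheses (sp : surj p) (injf : injective f).

Definition pre y := proj1_sig (cid (sp y)).
Lemma preP y : p (pre y) = y. Proof. exact: (proj2_sig (cid (sp y))). Qed.

Fixpoint seqa (a0 : G) k := if k is k'.+1 then pre (f (seqa a0 k')) else a0.
Lemma seqaS a0 k : p (seqa a0 k.+1) = f (seqa a0 k). Proof. exact: preP. Qed.

Lemma f0 x : f x = 0 -> x = 0.
Proof. by move=> h; apply: injf; rewrite h raddf0. Qed.

Lemma lc_shift h n d : p h = 0 ->
  p (lc (seqa h) n.+1 d) = f (lc (seqa h) n (fun i => d i.+1)).
Proof.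
move=> ph; rewrite /lc big_ord_recl raddfD raddfMz /= ph mul0rz add0r.
rewrite !raddf_sum; apply: eq_bigr => i _.
by rewrite !raddfMz /= seqaS.
Qed.

Lemma indepA h : p h = 0 -> (forall n : int, n != 0 -> h *~ n != 0) ->
  forall n d, lc (seqa h) n d = 0 -> forall i, (i < n)%N -> d i = 0.
Proof.
move=> ph hinf; elim=> [//|n IH] d E.
have E' : lc (seqa h) n (fun i => d i.+1) = 0 by apply: f0; rewrite -lc_shift // E raddf0.
have hS := IH _ E'.
have d0 : d 0%N = 0.
  move: E; rewrite /lc big_ord_recl big1 ?addr0 /=.
    by move=> /eqP; apply: contraTeq => /hinf.
  by move=> i _; rewrite hS // mulr0z.
by move=> [|i] //; rewrite ltnS => /hS.
Qed.

Lemma caseA h : p h = 0 -> (forall n : int, n != 0 -> h *~ n != 0) ->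
  exists R, epi_image G R /\ ~ Hopfian R.
Proof.
move=> ph hinf; set a := seqa h.
pose pF x := exists n d, x = lc a n (fun i => d i * 2).
have HpF : subgrp pF.
  split; first by exists 0%N, (fun _ => 0); rewrite /lc big_ord0.
  move=> _ _ [n [d ->]] [n' [d' ->]].
  set K := maxn n n'.
  exists K, (fun i => cf n d i - cf n' d' i).
  rewrite (lc_pad _ _ (leq_maxl n n')) (lc_pad _ _ (leq_maxr n n')) -/K -lcB.
  by apply: lc_ext => i; rewrite /cf; do 2 case: ifP; rewrite ?mulrBl ?mul0r.
have [G1 [pi [spi kpi]]] := quot_exists HpF.
have two i : pi (a i) *+ 2 = 0.
  rewrite -raddfMn; apply/kpi; exists i.+1, (fun t => (t == i)%:Z).
  by rewrite -lcZ lc_single.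
suff hb : forall j k, (j < k)%N -> exists n, (pi (a k) - pi (a j)) *+ n != 0 /\
    (pi (a k) - pi (a j)) *+ (n * 2) = 0.
  have [R [eR nR]] := @qseq_case G1 2 (fun k => pi (a k)) erefl hb.
  by exists R; split => //; apply: epi_trans eR; exists pi.
move=> j k jk; exists 1%N; split; last by rewrite mul1n mulrnBl !two subrr.
  rewrite mulr1n -raddfB; apply/eqP => /kpi [n [d E]].
  set N := maxn n k.+1.
  have kN : (k < N)%N by rewrite leq_max ltnSn orbT.
  have jN : (j < N)%N by apply: ltn_trans kN.
  have := @indepA h ph hinf N (fun i => (i == k)%:Z - (i == j)%:Z - cf n (fun i => d i * 2) i).
  rewrite !lcB lc_single // lc_single // -lc_pad ?leq_maxl // -E subrr => /(_ erefl k kN).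
  rewrite eqxx /cf /= eq_sym (ltn_eqF jk) subr0.
  by case: ifP => _ /eqP; rewrite ?subr0 ?oner_eq0 // subr_eq0 eq_sym (negbTE (two_odd _)).
Qed.

Fixpoint Rk (k : nat) (x y : G) : Prop :=
  if k is k'.+1 then exists z, p x = f z /\ Rk k' z y else x = y.

Lemma Rk_B k x y x' y' : Rk k x y -> Rk k x' y' -> Rk k (x - x') (y - y').
Proof.
elim: k x y x' y' => [|k IH] x y x' y' /=; first by move=> -> ->.
move=> [z [pz Rz]] [z' [pz' Rz']]; exists (z - z'); split; last exact: IH.
by rewrite !raddfB pz pz'.
Qed.

Lemma Rk_Mn k x y m : Rk k x y -> Rk k (x *+ m) (y *+ m).
Proof.
elim: k x y => [|k IH] x y /=; first by move=> ->.
move=> [z [pz Rz]]; exists (z *+ m); split; last exact: IH.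
by rewrite !raddfMn pz.
Qed.

Lemma Rk_0 k y : Rk k 0 y -> y = 0.
Proof.
elim: k => [|k IH] /=; first by move=> <-.
move=> [z [pz Rz]]; apply: IH; suff <- : z = 0 by [].
by apply: f0; rewrite -pz raddf0.
Qed.

Lemma Rk_00 k : Rk k 0 0.
Proof. by elim: k => [|k IH] //=; exists 0; rewrite !raddf0. Qed.

Lemma Rk_ak h k : Rk k (seqa h k) h.
Proof. by elim: k => [|k IH] //=; exists (seqa h k); rewrite seqaS. Qed.

Lemma Rk_aj h : p h = 0 -> forall k j, (j < k)%N -> Rk k (seqa h j) 0.
Proof.
move=> ph; elim=> [//|k IH] [|j] jk /=.
  by exists 0; rewrite raddf0 ph; split => //; exact: Rk_00.
by exists (seqa h j); rewrite seqaS; split => //; apply: IH.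
Qed.

Lemma prime_elt (R : zmodType) (z : R) N : z != 0 -> (0 < N)%N -> z *+ N = 0 ->
  exists q m, [/\ prime q, z *+ m != 0 & z *+ (m * q) = 0].
Proof.
move=> z0; elim/ltn_ind: N => N IH N0 zN.
have N1 : (1 < N)%N.
  by rewrite ltn_neqAle eq_sym N0 andbT; apply/eqP => N1; rewrite N1 mulr1n in zN; rewrite zN eqxx in z0.
have pq := pdiv_prime N1.
have qN : (pdiv N %| N)%N := pdiv_dvd N.
have NE : (N %/ pdiv N * pdiv N)%N = N by rewrite divnK.
have [h|h] := eqVneq (z *+ (N %/ pdiv N)) 0.
  have lt : (N %/ pdiv N < N)%N by rewrite ltn_Pdiv // prime_gt1.
  have pos : (0 < N %/ pdiv N)%N by rewrite divn_gt0 ?prime_gt0 // dvdn_leq.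
  exact: IH _ lt pos h.
by exists (pdiv N), (N %/ pdiv N)%N; split => //; rewrite NE.
Qed.

Lemma caseB : (forall x, p x = 0 -> exists n : int, n != 0 /\ x *~ n = 0) ->
  forall h0, h0 != 0 -> p h0 = 0 -> exists R, epi_image G R /\ ~ Hopfian R.
Proof.
move=> htor h0 h00 ph0.
have tor_nat x : p x = 0 -> exists N, (0 < N)%N /\ x *+ N = 0.
  move=> /htor [n [n0 xn]]; exists `|n|%N; split; first by rewrite absz_gt0.
  exact: mulrz_abs0.
have [N0 [N00 hN0]] := tor_nat _ ph0.
have [q [m [pq hm0 hmq]]] := prime_elt h00 N00 hN0.
set h := h0 *+ m.
have ph : p h = 0 by rewrite raddfMn ph0 mul0rn.
have atr k : exists N, (0 < N)%N /\ seqa h k *+ N = 0.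
  elim: k => [|k [M [M0 hM]]]; first exact: tor_nat.
  have [M' [M'0 hM']] : exists M', (0 < M')%N /\ (seqa h k.+1 *+ M) *+ M' = 0.
    by apply: tor_nat; rewrite raddfMn seqaS -raddfMn hM raddf0.
  by exists (M * M')%N; rewrite muln_gt0 M0 M'0 mulrnA.
apply: (@qseq_case G q (seqa h) pq) => j k jk.
set x := seqa h k - seqa h j.
have Rx : Rk k x h by rewrite -[h]subr0; apply: Rk_B; [exact: Rk_ak | exact: Rk_aj].
have [N [Npos xN]] : exists N, (0 < N)%N /\ x *+ N = 0.
  have [N1 [N10 h1]] := atr k; have [N2 [N20 h2]] := atr j.
  exists (N1 * N2)%N; rewrite muln_gt0 N10 N20; split => //.
  by rewrite /x mulrnBl mulrnA h1 mul0rn [(N1 * N2)%N]mulnC mulrnA h2 mul0rn subrr.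
have [m' cm NE] := pfactor_coprime pq Npos.
have hm' : h *+ m' != 0.
  apply/eqP => hm; move/eqP: hm0; apply; apply: (coprime_kill pq cm) => //.
  by rewrite /h -mulrnA hmq.
have y0 : x *+ m' != 0.
  apply/eqP => y0; move/eqP: hm'; apply; apply: (@Rk_0 k).
  by rewrite -y0; exact: Rk_Mn.
have yN : x *+ m' *+ q ^ logn q N = 0 by rewrite -mulrnA -NE.
have [i [yi yiq]] := @min_order2 _ q (logn q N) _ y0 yN.
exists (m' * q ^ i)%N; split; first by rewrite mulrnA.
by rewrite -mulnA mulrnA.
Qed.
End Seq.


Lemma core (G : zmodType) : (forall Q, epi_image G Q -> Hopfian Q) -> Bassian G.
Proof.
move=> hH Q0 p sp nip [f injf].
have [h0 [h00 ph0]] : exists h0, h0 != 0 /\ p h0 = 0.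
  apply: contrapT => hn; apply: nip => x y E; apply/eqP; rewrite -subr_eq0.
  apply: contrapT => /negP ne; apply: hn; exists (x - y); split => //.
  by rewrite raddfB E subrr.
have [[h [ph hinf]]|nA] := pselect (exists h, p h = 0 /\ forall n : int, n != 0 -> h *~ n != 0).
  have [R [eR nR]] := caseA sp injf ph hinf.
  exact: nR (hH R eR).
have htor x : p x = 0 -> exists n : int, n != 0 /\ x *~ n = 0.
  move=> px; apply: contrapT => hn; apply: nA; exists x; split => // n n0.
  by apply/eqP => xn; apply: hn; exists n.
have [R [eR nR]] := caseB sp injf htor h00 ph0.
exact: nR (hH R eR).
Qed.

Lemma Bassian_Hopfian (G : zmodType) : Bassian G -> Hopfian G.
Proof.
move=> hB Q p sp nip [f [g fg gf]]; apply: (hB Q p sp nip); exists f.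
exact: can_inj fg.
Qed.

Lemma super_core (X : zmodType -> Prop) :
  (forall G : zmodType, Bassian G -> X G) ->
  (forall G : zmodType, X G -> Hopfian G) ->
  forall G : zmodType, super X G <-> super Bassian G.
Proof.
move=> BX XH G; split.
  move=> [XG hQ]; split.
    by apply: core => Q eQ; apply: XH; apply: hQ.
  move=> Q eQ; apply: core => R eR; apply: XH; apply: hQ; exact: epi_trans eR.
by move=> [BG hQ]; split; [apply: BX | move=> Q eQ; apply: BX; apply: hQ].
Qed.

Theorem theorem5p6 :
  (forall X : zmodType -> Prop,
      iso_closed X ->
      (forall G : zmodType, Bassian G -> X G) ->
      (forall G : zmodType, X G -> Hopfian G) ->
      forall G : zmodType, super X G <-> super Bassian G)
  /\ (forall G : zmodType, super Hopfian G <-> super Bassian G).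
Proof.
split.
  by move=> X _; apply: super_core.
by apply: super_core => // G; apply: Bassian_Hopfian.
Qed.
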